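(* Let $d\ge2$, $H=\sum_{k=0}^{d-1}h_k|k\rangle\langle k|$ Hermitian on $\mathbb{C}^d$, $\rho_0$ a density matrix and $U_\tau$ a unitary on $\mathbb{C}^d$. For the cyclic process $H_0=H_\tau=H$, $$\big|\langle w_\tau^2\rangle_{\mathrm{MH}}-\langle w_\tau^2\rangle_{\mathrm{TPM}}\big|\le \frac{C_{l_1}(\rho_0)}{2}\Big(\mathrm{Tr}\,H^2+2\max_k|h_k|\,\mathrm{Tr}|H|\Big).$$ Moreover, if $d=2$ then $\langle w_\tau^2\rangle_{\mathrm{MH}}=\langle w_\tau^2\rangle_{\mathrm{TPM}}$ for every qubit state $\rho_0$, every $2\times2$ unitary $U_\tau$ and every $H$.
   Context: Setting: cyclic process with Hamiltonian $H$ (eigenbasis $\{|n\rangle\}$, $\Pi_n=|n\rangle\langle n|$) and unitary $U_\tau$. The TPM joint probability is $P^{\mathrm{TPM}}(m,n)=\mathrm{Tr}[\Pi_m U_\tau \Pi_n\rho_0\Pi_n U_\tau^\dagger \Pi_m]$ and the Margenau–Hill quasiprobability is $P^{\mathrm{MH}}(m,n)=\mathrm{Re}\,\mathrm{Tr}[U_\tau^\dagger \Pi_m U_\tau \Pi_n \rho_0]$; moments are $\langle w_\tau^k\rangle_{\mathcal O}=\sum_{m,n}P^{\mathcal O}(m,n)(h_m-h_n)^k$. Equivalently $\langle w_\tau^2\rangle_{\mathrm{TPM}}=\mathrm{Tr}[\Delta(\rho_0)(U_\tau^\dagger HU_\tau-H)^2]$ and $\langle w_\tau^2\rangle_{\mathrm{MH}}=\mathrm{Tr}[\rho_0(U_\tau^\dagger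 HU_\tau-H)^2]$, with $\Delta(\rho)=\sum_n\Pi_n\rho\Pi_n$. $C_{l_1}(\rho)=\sum_{i\ne j}|\langle i|\rho|j\rangle|$ is the $l_1$-coherence in the basis $\{|k\rangle\}$; $\mathrm{Tr}|H|=\sum_k|h_k|$. *)

(* Defs.v *)
(* Complex scalars: an arbitrary numClosedFieldType C
   (e.g. algC, or complex R over a real closed field). *)
From HB Require Import structures.
From mathcomp Require Import all_boot all_order all_algebra.
From mathcomp Require Import sesquilinear spectral.
Set Implicit Arguments. Unset Strict Implicit. Unset Printing Implicit Defensive.
Import Order.TTheory GRing.Theory Num.Theory.
Local Open Scope ring_scope.
Local Open Scope sesquilinear_scope.

Section Defs.
Variable C : numClosedFieldType.
Variable d : nat.

Definition adj (A : 'M[C]_d) : 'M[C]_d := A ^t*.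

Definition density (rho : 'M[C]_d) : Prop :=
  adj rho = rho /\
  (forall v : 'rV[C]_d, 0 <= (v *m rho *m v ^t*) 0 0) /\
  \tr rho = 1.

Definition hamil (h : 'I_d -> C) : 'M[C]_d := diag_mx (\row_k h k).

Definition proj (n : 'I_d) : 'M[C]_d := delta_mx n n.

Definition P_TPM (U rho : 'M[C]_d) (m n : 'I_d) : C :=
  \tr (proj m *m U *m proj n *m rho *m proj n *m adj U *m proj m).

Definition P_MH (U rho : 'M[C]_d) (m n : 'I_d) : C :=
  'Re (\tr (adj U *m proj m *m U *m proj n *m rho)).

Definition moment (P : 'I_d -> 'I_d -> C) (h : 'I_d -> C) (k : nat) : C :=
  \sum_(m < d) \sum_(n < d) P m n * (h m - h n) ^+ k.

Definition w2_TPM (h : 'I_d -> C) (U rho : 'M[C]_d) : C := moment (P_TPM U rho) h 2.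
Definition w2_MH (h : 'I_d -> C) (U rho : 'M[C]_d) : C := moment (P_MH U rho) h 2.

Definition Cl1 (rho : 'M[C]_d) : C := \sum_(i < d) \sum_(j < d | i != j) `|rho i j|.

Definition trH2 (h : 'I_d -> C) : C := \tr (hamil h *m hamil h).
Definition trabsH (h : 'I_d -> C) : C := \sum_(k < d) `|h k|.
Definition maxabsh (h : 'I_d -> C) : C := \big[Num.max/0]_(k < d) `|h k|.
End Defs.

(* Main.v *)
Require Import Defs.
From HB Require Import structures.
From mathcomp Require Import all_boot all_order all_algebra.
From mathcomp Require Import sesquilinear spectral.
From mathcomp Require Import ring.
Import Order.TTheory GRing.Theory Num.Theory.
Set Implicit Arguments. Unset Strict Implicit. Unset Printing Implicit Defensive.
Local Open Scope ring_scope.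

Section S.
Variable C : numClosedFieldType.
Variable d : nat.
Implicit Types (A B : 'M[C]_d).

Lemma mid_delta A B (a b i j : 'I_d) :
  (A *m (delta_mx a b *m B)) i j = A i a * B b j.
Proof.
rewrite mxE (bigD1 a) //= big1 ?addr0.
  rewrite mxE (bigD1 b) //= big1 ?addr0; first by rewrite mxE !eqxx mul1r.
  by move=> k kb; rewrite mxE eqxx (negPf kb) mul0r.
move=> k ka; rewrite mxE big1 ?mulr0 // => l _.
by rewrite mxE (negPf ka) mul0r.
Qed.

Lemma tr_delta B (a b : 'I_d) : \tr (delta_mx a b *m B) = B b a.
Proof.
rewrite /mxtrace (bigD1 a) //= big1 ?addr0.
  rewrite mxE (bigD1 b) //= big1 ?addr0; first by rewrite mxE !eqxx mul1r.
  by move=> k kb; rewrite mxE eqxx (negPf kb) mul0r.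
move=> k ka; rewrite mxE big1 // => l _.
by rewrite mxE (negPf ka) mul0r.
Qed.

Lemma r_delta A (a b i j : 'I_d) : (A *m delta_mx a b) i j = A i a * (b == j)%:R.
Proof.
rewrite mxE (bigD1 a) //= big1 ?addr0; first by rewrite mxE eqxx andTb eq_sym.
by move=> k ka; rewrite mxE (negPf ka) mulr0.
Qed.

Lemma PTPME (U rho : 'M[C]_d) (m n : 'I_d) : P_TPM U rho m n = U m n * (rho n n * (U m n)^*).
Proof.
rewrite /P_TPM /proj -!mulmxA tr_delta !mid_delta r_delta eqxx mulr1 /adj !mxE.
by [].
Qed.

Lemma PMHE (U rho : 'M[C]_d) (m n : 'I_d) : P_MH U rho m n = 'Re (\sum_i (U m i)^* * U m n * rho n i).
Proof.
rewrite /P_MH /proj -!mulmxA /mxtrace; congr (Re _); apply: eq_bigr => i _.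
by rewrite !mid_delta /adj !mxE mulrA.
Qed.

Definition Ef (h : 'I_d -> C) (U : 'M[C]_d) (n i : 'I_d) : C :=
  \sum_m (U m i)^* * U m n * (h m - h n) ^+ 2.
Definition Df (h : 'I_d -> C) (U rho : 'M[C]_d) : C :=
  \sum_n \sum_(i | n != i) rho n i * Ef h U n i.

Lemma diffE (h : 'I_d -> C) (U rho : 'M[C]_d) :
  (forall k, h k \is Num.real) -> (forall n, rho n n \is Num.real) ->
  w2_MH h U rho - w2_TPM h U rho = 'Re (Df h U rho).
Proof.
move=> hr rr.
have rR m n : (h m - h n) ^+ 2 \is Num.real by rewrite realX // rpredB.
have ->: w2_MH h U rho =
  'Re (\sum_m \sum_n (\sum_i (U m i)^* * U m n * rho n i) * (h m - h n) ^+ 2).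
  rewrite /w2_MH /moment raddf_sum; apply: eq_bigr => m _.
  rewrite raddf_sum; apply: eq_bigr => n _.
  by rewrite PMHE -ReMr.
have ->: w2_TPM h U rho =
  'Re (\sum_m \sum_n (U m n * (rho n n * (U m n)^*)) * (h m - h n) ^+ 2).
  rewrite /w2_TPM /moment raddf_sum; apply: eq_bigr => m _.
  rewrite raddf_sum; apply: eq_bigr => n _.
  rewrite PTPME; apply/esym/Creal_ReP.
  by rewrite rpredM // mulrCA -normCK rpredM // realX // normr_real.
rewrite -raddfB; congr (Re _).
rewrite -sumrB.
under eq_bigr => m _ do rewrite -sumrB.
have step m n : (\sum_i (U m i)^* * U m n * rho n i) * (h m - h n) ^+ 2 -
    U m n * (rho n n * (U m n)^*) * (h m - h n) ^+ 2 =
    \sum_(i | i != n) (U m i)^* * U m n * rho n i * (h m - h n) ^+ 2.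
  rewrite (bigD1 n) //= -big_distrl /= -mulrBl; congr (_ * _).
  have ->: U m n * (rho n n * (U m n)^*) = (U m n)^* * U m n * rho n n.
    by ring.
  by rewrite addrAC subrr add0r.
under eq_bigr => m _ do under eq_bigr => n _ do rewrite step.
rewrite exchange_big /Df; apply: eq_bigr => n _.
rewrite exchange_big /=.
apply: eq_big => [i|i _]; first by rewrite eq_sym.
rewrite /Ef big_distrr /=; apply: eq_bigr => m _.
by ring.
Qed.

Lemma colU (U : 'M[C]_d) : U \is unitarymx ->
  forall i n : 'I_d, \sum_m (U m i)^* * U m n = (i == n)%:R.
Proof.
rewrite -trmxC_unitary => /unitarymxP; rewrite trmxCK => /matrixP H i n.
have := H i n; rewrite !mxE => <-; apply: eq_bigr => m _; by rewrite !mxE.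
Qed.

Lemma rowU (U : 'M[C]_d) : U \is unitarymx ->
  forall m : 'I_d, \sum_k `|U m k| ^+ 2 = 1.
Proof.
move=> /unitarymxP /matrixP H m.
have E := H m m; rewrite !mxE eqxx /= in E; rewrite -[RHS]/(true%:R) -E.
by apply: eq_bigr => k _; rewrite !mxE normCK.
Qed.

Lemma pairU (U : 'M[C]_d) : U \is unitarymx ->
  forall m i n : 'I_d, i != n -> `|U m i| * `|U m n| *+ 2 <= 1.
Proof.
move=> Uu m i n ni.
apply: le_trans (real_leif_mean_square_scaled _ _) _; rewrite ?normr_real //.
rewrite -(rowU Uu m) (bigD1 i) //= (bigD1 n) 1?eq_sym //= addrA lerDl.
by apply: sumr_ge0 => k _; rewrite exprn_ge0.
Qed.

Lemma maxabs_seq (h : 'I_d -> C) (r : seq 'I_d) :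
  0 <= \big[Num.max/0]_(k <- r) `|h k| /\
  forall k, k \in r -> `|h k| <= \big[Num.max/0]_(k <- r) `|h k|.
Proof.
elim: r => [|a r [IH0 IH]]; first by rewrite big_nil.
rewrite big_cons.
have xr : `|h a| \is Num.real by apply: normr_real.
have yr : \big[Num.max/0]_(k <- r) `|h k| \is Num.real by apply: ger0_real.
rewrite comparable_maxEge ?real_comparable //.
case: ifP => H.
  split=> // k; rewrite inE => /orP[/eqP->//|kr].
  exact: le_trans (IH k kr) H.
have H' : `|h a| <= \big[Num.max/0]_(k <- r) `|h k|.
  by apply: ltW; rewrite real_ltNge ?H.
split=> // k; rewrite inE => /orP[/eqP->//|kr].
exact: IH.
Qed.

Lemma maxabs_ge (h : 'I_d -> C) n : `|h n| <= maxabsh h.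
Proof. by have [_ ->] := maxabs_seq h (index_enum 'I_d); rewrite ?mem_index_enum. Qed.

Lemma maxabs_ge0 (h : 'I_d -> C) : 0 <= maxabsh h.
Proof. by have [-> _] := maxabs_seq h (index_enum 'I_d). Qed.

Lemma trH2E (h : 'I_d -> C) : (forall k, h k \is Num.real) ->
  trH2 h = \sum_k `|h k| ^+ 2.
Proof.
move=> hr; rewrite /trH2 /hamil mulmx_diag mxtrace_diag.
by apply: eq_bigr => k _; rewrite !mxE real_normK // expr2.
Qed.

Lemma Ef_bound (h : 'I_d -> C) (U : 'M[C]_d) (n i : 'I_d) :
  (forall k, h k \is Num.real) -> U \is unitarymx -> n != i ->
  `|Ef h U n i| *+ 2 <= trH2 h + 2%:R * maxabsh h * trabsH h.
Proof.
move=> hr Uu ni.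
pose a m := (U m i)^* * U m n.
have s0 : \sum_m a m = 0 by rewrite /a colU // eq_sym (negPf ni).
have -> : Ef h U n i = \sum_m a m * (h m ^+ 2 - 2%:R * h m * h n).
  rewrite /Ef; transitivity
    (\sum_m (a m * (h m ^+ 2 - 2%:R * h m * h n) + a m * h n ^+ 2)).
    by apply: eq_bigr => m _; rewrite /a; ring.
  by rewrite big_split /= -big_distrl /= s0 mul0r addr0.
pose b m := `|h m| ^+ 2 + 2%:R * `|h m| * maxabsh h.
have b0 m : 0 <= b m.
  by rewrite /b addr_ge0 ?exprn_ge0 // mulr_ge0 ?mulr_ge0 ?maxabs_ge0.
apply: le_trans (_ : (\sum_m `|a m| * b m) *+ 2 <= _).
  apply: ler_wMn2r; apply: le_trans (ler_norm_sum _ _ _) _.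
  apply: ler_sum => m _; rewrite normrM ler_wpM2l //.
  apply: le_trans (ler_normB _ _) _; rewrite /b normrX lerD2l.
  rewrite !normrM normr_nat -mulrA -[X in _ <= X]mulrA ler_wpM2l //.
  by rewrite ler_wpM2l // maxabs_ge.
rewrite -sumrMnl.
apply: le_trans (_ : \sum_m b m <= _).
  apply: ler_sum => m _; rewrite -mulrnAl -[X in _ <= X]mul1r ler_wpM2r //.
  by rewrite /a normrM norm_conjC pairU // eq_sym.
rewrite /b big_split /= trH2E // /trabsH big_distrr /=.
rewrite le_eqVlt; apply/orP; left; apply/eqP.
by congr (_ + _); apply: eq_bigr => m _; ring.
Qed.
End S.

Lemma herm_entry (C : numClosedFieldType) d (rho : 'M[C]_d) : density rho ->
  forall i j, (rho j i)^* = rho i j.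
Proof.
move=> [H _] i j; have := congr1 (fun M : 'M[C]_d => M i j) H.
by rewrite /adj !mxE.
Qed.

Lemma part2 (C : numClosedFieldType) (h : 'I_2 -> C) (rho U : 'M[C]_2) :
  (forall k, h k \is Num.real) -> density rho -> U \is unitarymx ->
  'Re (Df h U rho) = 0.
Proof.
move=> hr dr Uu.
have c01 := colU Uu ord0 (lift ord0 ord0).
have := herm_entry dr.
rewrite /Df /Ef.
rewrite !big_ord_recl !big_ord0 /= in c01 *.
do 3! rewrite ?big_mkcond ?big_ord_recl ?big_ord0 /=.
set o1 := lift ord0 ord0.
set o0 := @ord0 1.
move=> hc. rewrite !subrr expr0n /= !mulr0 !add0r !addr0.
move/eqP: c01; rewrite addr0 addr_eq0 => /eqP c01.
rewrite c01 -(hc o1 o0).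
have rr : (h o1 - h o0) ^+ 2 \is Num.real by rewrite realX // rpredB.
have -> : (rho o0 o1)^* * (- ((U o1 o0)^* * U o1 o1) * (h o0 - h o1) ^+ 2)
   = - (rho o0 o1 * ((U o1 o1)^* * U o1 o0 * (h o1 - h o0) ^+ 2))^*.
  have rd : (h o1 - h o0)^* = h o1 - h o0 by rewrite conj_Creal // rpredB.
  rewrite !rmorphM /= conjCK rd; ring.
by rewrite raddfD raddfN /= Re_conj subrr.
Qed.

Theorem theorem2 (C : numClosedFieldType) :
  (forall (d : nat), (2 <= d)%N ->
   forall (h : 'I_d -> C) (rho U : 'M[C]_d),
     (forall k, h k \is Num.real) -> density rho -> U \is unitarymx ->
     `|w2_MH h U rho - w2_TPM h U rho|
       <= Cl1 rho / 2%:R * (trH2 h + 2%:R * maxabsh h * trabsH h))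
  /\
  (forall (h : 'I_2 -> C) (rho U : 'M[C]_2),
     (forall k, h k \is Num.real) -> density rho -> U \is unitarymx ->
     w2_MH h U rho = w2_TPM h U rho).
Proof.
have rdiag d (rho : 'M[C]_d) : density rho -> forall n, rho n n \is Num.real.
  by move=> dr n; rewrite CrealE herm_entry.
split.
  move=> d _ h rho U hr dr Uu.
  rewrite diffE //; last exact: rdiag.
  apply: le_trans ((leif_normC_Re_Creal _).1) _.
  apply: le_trans (ler_norm_sum _ _ _) _.
  rewrite /Cl1 mulrAC -mulrA big_distrl /=; apply: ler_sum => n _.
  apply: le_trans (ler_norm_sum _ _ _) _.
  rewrite big_distrl /=; apply: ler_sum => i ni.
  rewrite normrM ler_wpM2l // ler_pdivlMr ?ltr0n // mulr_natr.
  exact: Ef_bound.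
move=> h rho U hr dr Uu.
apply/eqP; rewrite -subr_eq0; apply/eqP.
rewrite diffE //; last exact: rdiag.
exact: part2.
Qed.
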